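(* For every $\varepsilon\in(0,1]$ there exists $n_0$ such that for every $n\geq n_0$ the following holds. Let $G$ be an $(n,\varepsilon)$-digraph, let $\mathbf{x}$ be a perfect fractional matching of $G$ which is $b$-normal for some $b\geq1$, and let $(Z_t)_{t\in\mathbb{N}_0}$ be a random walk on $G$ induced by $\mathbf{x}$ following the pattern of an oriented path $L=(y_t)_{t\in\mathbb{N}_0}$. Then for every vertex $v\in V(G)$ and every $t\geq5+4b^2\varepsilon^{-1}\log b$, $\mathbb{P}[Z_t=v]=(1\pm e^{-\frac{\varepsilon}{2b^2}t})\frac1n$.
   Context: $\log=\log_2$; $a=(1\pm\delta)\beta$ means $(1-\delta)\beta\leq a\leq(1+\delta)\beta$. Digraphs have no loops and at most one edge from $v$ to $w$ per ordered pair. An $(n,\varepsilon)$-digraph is a digraph on $n$ vertices with every in- and out-degree at least $(\frac12+\varepsilon)n$. A perfect fractional matching of $G$ is $\mathbf{x}\colon E(G)\to\mathbb{R}_{\geq0}$ with $\sum_{w\in N^+(v)}\mathbf{x}_{vw}=1=\sum_{w\in N^-(v)}\mathbf{x}_{wv}$ for all $v$; it is $b$-normal if $\frac1{bn}\leq\mathbf{x}_e\leq\frac bn$ for all $e$. $L=(y_t)_{t\in\mathbb{N}_0}$ is an oriented path (not a subgraph of $G$) whose consecutive vertices $y_t,y_{t+1}$ are joined by exactly one of the edges $y_ty_{t+1}$, $y_{t+1}y_t$. The random walk on $G$ induced by $\mathbf{x}$ following the pattern of $L$ is a Markov chain $(Z_t)$ on $V(G)$ (with arbitrary initial state/distribution)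 with $\mathbb{P}[Z_{t+1}=w\mid Z_t=v]=\mathbf{x}_{vw}$ if $y_ty_{t+1}\in E(L)$ and $vw\in E(G)$, $=\mathbf{x}_{wv}$ if $y_{t+1}y_t\in E(L)$ and $wv\in E(G)$, and $=0$ otherwise. *)

(* Defs.v *)
From HB Require Import structures.
From mathcomp Require Import all_boot all_order all_algebra.
From mathcomp Require Import reals sequences exp.
Set Implicit Arguments. Unset Strict Implicit. Unset Printing Implicit Defensive.
Import Order.TTheory GRing.Theory Num.Theory.
Local Open Scope ring_scope.

(* A digraph on vertex set 'I_n: an edge relation E (E v w = edge v -> w),
   without loops.  At most one edge per ordered pair is automatic. *)
Definition loopless n (E : rel 'I_n) := forall v, ~~ E v v.

Definition outdeg n (E : rel 'I_n) (v : 'I_n) : nat := #|[set w | E v w]|.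
Definition indeg n (E : rel 'I_n) (v : 'I_n) : nat := #|[set w | E w v]|.

Definition neps_digraph (R : realType) n (eps : R) (E : rel 'I_n) :=
  loopless E /\
  forall v, ((1/2 + eps) * n%:R <= (outdeg E v)%:R) /\
            ((1/2 + eps) * n%:R <= (indeg E v)%:R).

(* x : weights on edges (values on non-edges are irrelevant). *)
Definition perfect_frac_matching (R : realType) n (E : rel 'I_n)
  (x : 'I_n -> 'I_n -> R) :=
  (forall v w, E v w -> 0 <= x v w) /\
  (forall v, \sum_(w | E v w) x v w = 1) /\
  (forall v, \sum_(w | E w v) x w v = 1).

Definition b_normal (R : realType) n (E : rel 'I_n) (x : 'I_n -> 'I_n -> R)
  (b : R) :=
  forall v w, E v w -> 1 / (b * n%:R) <= x v w <= b / n%:R.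

(* An oriented path L = (y_t) is encoded by its pattern
   dir : nat -> bool, where dir t = true iff y_t y_{t+1} in E(L)
   (and dir t = false iff y_{t+1} y_t in E(L)). *)
Definition trans (R : realType) n (E : rel 'I_n) (x : 'I_n -> 'I_n -> R)
  (dir : nat -> bool) (t : nat) (v w : 'I_n) : R :=
  if dir t then (if E v w then x v w else 0)
  else (if E w v then x w v else 0).

(* Law of Z_t of the Markov chain with initial distribution p0:
   walk_dist ... t v = P[Z_t = v]. *)
Fixpoint walk_dist (R : realType) n (E : rel 'I_n) (x : 'I_n -> 'I_n -> R)
  (dir : nat -> bool) (p0 : 'I_n -> R) (t : nat) : 'I_n -> R :=
  match t with
  | 0 => p0
  | t'.+1 => fun w => \sum_(v : 'I_n)
                 walk_dist E x dir p0 t' v * trans E x dir t' v w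
  end.

Definition is_distribution (R : realType) n (p : 'I_n -> R) :=
  (forall v, 0 <= p v) /\ \sum_(v : 'I_n) p v = 1.

Definition log2 (R : realType) (x : R) : R := ln x / ln 2.

(* Main.v *)
Require Import Defs.
From HB Require Import structures.
From mathcomp Require Import all_boot all_order all_algebra.
From mathcomp Require Import reals sequences exp.
From mathcomp Require Import ring lra.
Import Order.TTheory GRing.Theory Num.Theory.
Local Open Scope ring_scope.
Set Implicit Arguments.
Lemma exists_max (R : realType) n (p : 'I_n -> R) (i0 : 'I_n) :
  exists i, forall j, p j <= p i.
Proof.
case: (@arg_maxP _ R _ i0 predT p isT) => i _ H; exists i => j; exact: H.
Qed.

Lemma exists_min (R : realType) n (p : 'I_n -> R) (i0 : 'I_n) :
  exists i, forall j, p i <= p j.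
Proof.
have [i Hi] := @exists_max R n (fun j => - p j) i0.
exists i => j; have := Hi j; rewrite lerN2; by [].
Qed.

Lemma step_osc (R : realType) n (Q : 'I_n -> 'I_n -> R) (p : 'I_n -> R) (D s : R) :
 (forall v w, 0 <= Q v w) -> (forall w, \sum_v Q v w = 1) ->
 (forall w w', 1 - \sum_v Num.min (Q v w) (Q v w') <= s) ->
 (forall v u, p v - p u <= D) ->
 forall w w', (\sum_v p v * Q v w) - (\sum_v p v * Q v w') <= D * s.
Proof.
move=> Q0 Q1 Hs HD w w'.
have [vM HM] := @exists_max _ _ p w.
have [vm Hm] := @exists_min _ _ p w.
set mu := fun v => Num.min (Q v w) (Q v w').
set s0 := 1 - \sum_v mu v.
have Ea : \sum_v p v * Q v w = \sum_v p v * (Q v w - mu v) + \sum_v p v * mu v.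
  by rewrite -big_split /=; apply: eq_bigr => v _; ring.
have Eb : \sum_v p v * Q v w' = \sum_v p v * (Q v w' - mu v) + \sum_v p v * mu v.
  by rewrite -big_split /=; apply: eq_bigr => v _; ring.
have Sa : \sum_v (Q v w - mu v) = s0.
  by rewrite /s0 sumrB Q1.
have Sb : \sum_v (Q v w' - mu v) = s0.
  by rewrite /s0 sumrB Q1.
have A1 : \sum_v p v * (Q v w - mu v) <= p vM * s0.
  rewrite -Sa mulr_sumr; apply: ler_sum => v _; apply: ler_wpM2r.
    by rewrite subr_ge0 /mu ge_min lexx.
  exact: HM.
have A2 : p vm * s0 <= \sum_v p v * (Q v w' - mu v).
  rewrite -Sb mulr_sumr; apply: ler_sum => v _; apply: ler_wpM2r.
    by rewrite subr_ge0 /mu ge_min lexx orbT.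
  exact: Hm.
have s00 : 0 <= s0 by rewrite -Sa; apply: sumr_ge0 => v _; rewrite subr_ge0 /mu ge_min lexx.
have D0 : 0 <= D by have := HD w w; rewrite subrr.
have := HD vM vm => H1.
have := Hs w w' => H2.
rewrite Ea Eb.
have H3 : (p vM - p vm) * s0 <= D * s0 by apply: ler_wpM2r.
have H4 : D * s0 <= D * s by apply: ler_wpM2l.
nra.
Qed.
Section G.
Variables (R : realType) (n : nat) (E : rel 'I_n) (x : 'I_n -> 'I_n -> R)
  (b eps : R) (dir : nat -> bool).
Hypothesis HG : neps_digraph eps E.
Hypothesis HX : perfect_frac_matching E x.
Hypothesis Hb : 1 <= b.
Hypothesis HN : b_normal E x b.

Lemma trans_ge0 t v w : 0 <= trans E x dir t v w.
Proof.
case: HX => H0 _; rewrite /trans; case: (dir t).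
  by case: ifP => // /H0.
by case: ifP => // /H0.
Qed.

Lemma trans_col t w : \sum_v trans E x dir t v w = 1.
Proof.
case: HX => _ [H1 H2]; rewrite /trans; case: (dir t).
  by rewrite -(H2 w) [RHS]big_mkcond.
by rewrite -(H1 w) [RHS]big_mkcond.
Qed.

Lemma trans_row t v : \sum_w trans E x dir t v w = 1.
Proof.
case: HX => _ [H1 H2]; rewrite /trans; case: (dir t).
  by rewrite -(H1 v) [RHS]big_mkcond.
by rewrite -(H2 v) [RHS]big_mkcond.
Qed.

Lemma trans_le t v w : trans E x dir t v w <= b / n%:R.
Proof.
have b0 : 0 <= b / n%:R by apply: divr_ge0; [exact: le_trans ler01 Hb | exact: ler0n].
rewrite /trans; case: (dir t).
  by case: ifP => // /HN /andP[].
by case: ifP => // /HN /andP[].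
Qed.

Lemma overlap t w w' :
  2 * eps / b <= \sum_v Num.min (trans E x dir t v w) (trans E x dir t v w').
Proof.
have n0 : (0 < n)%N by case: n w => [[]|].
have nR : 0 < n%:R :> R by rewrite ltr0n.
have b0 : 0 < b by exact: lt_le_trans ltr01 Hb.
pose E' v u := if dir t then E v u else E u v.
pose A := [set v | E' v w]. pose B := [set v | E' v w'].
have hA : (1/2 + eps) * n%:R <= #|A|%:R.
  case: HG => _ /(_ w) []; rewrite /A /E'; case: (dir t) => //.
have hB : (1/2 + eps) * n%:R <= #|B|%:R.
  case: HG => _ /(_ w') []; rewrite /B /E'; case: (dir t) => //.
have hU : (#|A :|: B| <= n)%N by rewrite -[X in (_ <= X)%N]card_ord max_card.
have hI := cardsUI A B.
have hS : 2 * eps * n%:R <= #|A :&: B|%:R.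
  have : (#|A :|: B| + #|A :&: B|)%:R = #|A|%:R + #|B|%:R :> R by rewrite hI natrD.
  rewrite natrD => e. have : #|A :|: B|%:R <= n%:R :> R by rewrite ler_nat.
  lra.
have low : forall v, v \in A :&: B ->
  1 / (b * n%:R) <= Num.min (trans E x dir t v w) (trans E x dir t v w').
  move=> v; rewrite !inE /E' /trans; case: (dir t) => /andP[e1 e2];
  rewrite e1 e2 le_min; by have /andP[-> _] := HN e1; have /andP[-> _] := HN e2.
apply: le_trans (_ : \sum_(v in A :&: B) 1 / (b * n%:R) <= _).
  rewrite sumr_const.
  have -> : 2 * eps / b = (2 * eps * n%:R) * (1 / (b * n%:R)).
    by field; apply/andP; split; apply/lt0r_neq0.
  rewrite -[X in _ <= X]mulr_natl; apply: ler_wpM2r => //.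
  by apply: divr_ge0 => //; apply: mulr_ge0; lra.
rewrite [X in _ <= X](bigID (fun v => v \in A :&: B)) /=.
rewrite -[X in X <= _]addr0; apply: lerD.
  by apply: ler_sum => v /low.
apply: sumr_ge0 => v _; rewrite le_min !trans_ge0 //.
Qed.
End G.
Lemma numeric (R : realType) (eps b : R) (k : nat) :
  0 < eps -> 1 <= b -> 0 <= 1 - 2 * eps / b ->
  5 + 4 * b ^+ 2 / eps * log2 b <= k.+1%:R ->
  (1 - 2 * eps / b) ^+ k * b <= expR (- (eps / (2 * b ^+ 2)) * k.+1%:R).
Proof.
move=> e0 b1 s0 H.
have b0 : 0 < b by lra.
set L := ln b.
have L0 : 0 <= L by exact: ln_ge0.
have l2 : ln (2 : R) <= 1.
  have := @le_ln1Dx R 1 ltac:(lra). by have -> : (1 + 1 : R) = 2 by [].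
have l20 : 0 < ln (2 : R).
  rewrite -ln1 ltr_ln ?posrE //; lra.
have LM : L <= log2 b.
  rewrite /log2 -/L ler_pdivlMr //.
  have : L * ln 2 <= L * 1 by apply: ler_wpM2l.
  by rewrite mulr1.
have c0 : 0 <= 4 * b ^+ 2 / eps.
  by apply: divr_ge0; [apply: mulr_ge0; [lra| exact: sqr_ge0] | lra].
have H2 : 4 * b ^+ 2 / eps * L <= k.+1%:R - 5.
  have : 4 * b ^+ 2 / eps * L <= 4 * b ^+ 2 / eps * log2 b by apply: ler_wpM2l.
  lra.
have H3 : L <= (k.+1%:R - 5) * (eps / (4 * b ^+ 2)).
  have -> : L = (4 * b ^+ 2 / eps * L) * (eps / (4 * b ^+ 2)).
    field; apply/andP; split; apply/lt0r_neq0 => //; rewrite exprn_gt0 //.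
  apply: ler_wpM2r => //; apply: divr_ge0; [lra| apply: mulr_ge0; [lra|exact: sqr_ge0]].
have S1 : 1 - 2 * eps / b <= expR (- (2 * eps / b)).
  by have := expR_ge1Dx (- (2 * eps / b)).
have S2 : (1 - 2 * eps / b) ^+ k <= expR (- (2 * eps / b) * k%:R).
  by rewrite expRM_natr; apply: lerXn2r => //; rewrite nnegrE ?expR_ge0.
apply: (@le_trans _ _ (expR (- (2 * eps / b) * k%:R) * expR L)).
  rewrite lnK ?posrE //; apply: ler_wpM2r => //; lra.
rewrite -expRD ler_expR.
have key : - (2 * eps / b) * k%:R + (k.+1%:R - 5) * (eps / (4 * b ^+ 2))
           + (eps / (2 * b ^+ 2)) * k.+1%:R
         = (eps / (4 * b ^+ 2)) * (3 * k%:R - 2 - 8 * b * k%:R).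
  rewrite -addn1 natrD; field; apply/lt0r_neq0; lra.
have k0 : 0 <= k%:R :> R by exact: ler0n.
have neg : 3 * k%:R - 2 - 8 * b * k%:R <= 0 by nra.
have pos : 0 <= eps / (4 * b ^+ 2).
  apply: divr_ge0; [lra| apply: mulr_ge0; [lra|exact: sqr_ge0]].
have : (eps / (4 * b ^+ 2)) * (3 * k%:R - 2 - 8 * b * k%:R) <= 0.
  exact: mulr_ge0_le0.
rewrite -key. lra.
Qed.

Unset Implicit Arguments.
Lemma walk_sum (R : realType) n (E : rel 'I_n) (x : 'I_n -> 'I_n -> R) (b eps : R) dir p0 :
  neps_digraph eps E -> perfect_frac_matching E x -> 1 <= b -> b_normal E x b ->
  is_distribution p0 ->
  forall t, (forall v, 0 <= walk_dist E x dir p0 t v) /\ \sum_v walk_dist E x dir p0 t v = 1.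
Proof.
move=> HG HX Hb HN [P0 P1]; elim=> [|t [IH0 IH1]] //=; split.
  move=> w; apply: sumr_ge0 => v _; apply: mulr_ge0 => //.
  exact: (trans_ge0 dir HX).
rewrite exchange_big /= -IH1; apply: eq_bigr => v _.
by rewrite -mulr_sumr (trans_row dir HX) mulr1.
Qed.

Theorem corollary5p4 (R : realType) (eps : R) :
  0 < eps <= 1 ->
  exists n0 : nat, forall n : nat, (n0 <= n)%N ->
  forall (E : rel 'I_n) (x : 'I_n -> 'I_n -> R) (b : R)
         (dir : nat -> bool) (p0 : 'I_n -> R),
    neps_digraph eps E ->
    perfect_frac_matching E x ->
    1 <= b -> b_normal E x b ->
    is_distribution p0 ->
    forall (v : 'I_n) (t : nat),
      5 + 4 * b ^+ 2 / eps * log2 b <= t%:R ->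
      (1 - expR (- (eps / (2 * b ^+ 2)) * t%:R)) / n%:R
        <= walk_dist E x dir p0 t v
        <= (1 + expR (- (eps / (2 * b ^+ 2)) * t%:R)) / n%:R.
Proof.
move=> /andP[e0 e1]; exists 0%N => n _ E x b dir p0 HG HX Hb HN HP v t Ht.
have n0 : (0 < n)%N by case: n v {HG HX HN HP E x p0} => [[]|].
have nR : 0 < n%:R :> R by rewrite ltr0n.
have b0 : 0 < b by lra.
set s := 1 - 2 * eps / b.
have s0 : 0 <= s.
  have := overlap dir HG HX Hb HN 0 v v.
  have : \sum_v0 Num.min (trans E x dir 0 v0 v) (trans E x dir 0 v0 v) <= 1.
    rewrite -(trans_col dir HX 0 v); apply: ler_sum => u _; rewrite ge_min lexx //.
  rewrite /s; lra.
have L0 : 0 <= log2 b.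
  rewrite /log2; apply: divr_ge0; first exact: ln_ge0.
  by apply: ln_ge0; lra.
have t5 : 5 <= t%:R :> R.
  have : 0 <= 4 * b ^+ 2 / eps * log2 b.
    apply: mulr_ge0 => //; apply: divr_ge0; [apply: mulr_ge0; [lra| exact: sqr_ge0] | lra].
  lra.
case: t Ht t5 => [|k] Ht t5; first by rewrite ler_nat in t5.
pose p := walk_dist E x dir p0.
have osc : forall j u w, p j.+1 u - p j.+1 w <= s ^+ j * (b / n%:R).
  elim=> [|j IH] u w.
    rewrite expr0 mul1r.
    have H1 : p 1%N u <= b / n%:R.
      rewrite /p /=. 
      apply: (@le_trans _ _ (\sum_v0 p0 v0 * (b / n%:R))).
        apply: ler_sum => v0 _; apply: ler_wpM2l; first by case: HP.
        exact: trans_le.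
      by rewrite -mulr_suml; case: HP => _ ->; rewrite mul1r.
    have H2 : 0 <= p 1%N w by case: (@walk_sum _ _ _ _ _ _ dir p0 HG HX Hb HN HP 1) => ->.
    lra.
  rewrite exprSr -mulrA [s * _]mulrC mulrA.
  apply: (@step_osc R n (trans E x dir j.+1) (p j.+1)).
  - by move=> ? ?; exact: trans_ge0.
  - by move=> ?; exact: trans_col.
  - move=> w1 w2; have := overlap dir HG HX Hb HN j.+1 w1 w2; rewrite /s; lra.
  - exact: IH.
set D := s ^+ k * (b / n%:R).
have DE : D <= expR (- (eps / (2 * b ^+ 2)) * k.+1%:R) / n%:R.
  rewrite /D mulrA; apply: ler_wpM2r; first by rewrite invr_ge0; lra.
  exact: numeric.
have [_ S1] := @walk_sum _ _ _ _ _ _ dir p0 HG HX Hb HN HP k.+1.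
have eqS : n%:R * p k.+1 v - 1 = \sum_u (p k.+1 v - p k.+1 u).
  by rewrite sumrB S1 sumr_const card_ord mulr_natl.
have up : n%:R * p k.+1 v - 1 <= n%:R * D.
  have -> : n%:R * D = \sum_(u : 'I_n) D by rewrite sumr_const card_ord mulr_natl.
  rewrite eqS.
  by apply: ler_sum => u _; exact: osc.
have lo : - (n%:R * D) <= n%:R * p k.+1 v - 1.
  have -> : n%:R * D = \sum_(u : 'I_n) D by rewrite sumr_const card_ord mulr_natl.
  rewrite eqS -sumrN.
  by apply: ler_sum => u _; have := osc k u v; rewrite /D; lra.
set e := expR _ in DE *.
have nD : D * n%:R <= e by rewrite -ler_pdivlMr.
change (((1 - e) / n%:R <= p k.+1 v) && (p k.+1 v <= (1 + e) / n%:R)).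
apply/andP; split.
  rewrite ler_pdivrMr //; lra.
rewrite ler_pdivlMr //; lra.
Qed.
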